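(* Let $X$ be a random variable taking values in $\mathbb{R}^n$ with a density $f$ with respect to Lebesgue measure, let $\varphi:\mathbb{R}^n\to\mathbb{R}$ be measurable, and let $a,b>0$. Assume $\mathbb{E}\, e^{\alpha\varphi(X)}<\infty$ for all $\alpha\in(-a,b)$, and let $c:(-a,b)\to\mathbb{R}$ be a smooth function such that $\alpha\mapsto e^{-c(\alpha)}\,\mathbb{E}\, e^{\alpha\varphi(X)}$ is log-concave on $(-a,b)$. Set $\psi_c(\alpha)=c(\alpha)-c(0)-c'(0)\alpha$, let $\psi_{c,+}$ be the restriction of $\psi_c$ to $(0,b)$ and $\psi_{c,-}$ its restriction to $(-a,0)$. Then for every $t>0$, $$\mathbb{P}(\varphi(X)-\mathbb{E}\varphi(X)>t)\le e^{-\psi_{c,+}^*(t)},\qquad \mathbb{P}(\varphi(X)-\mathbb{E}\varphi(X)<-t)\le e^{-\psi_{c,-}^*(-t)},$$ where $\psi_{c,\pm}^*$ denote the Fenchel–Legendre duals.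
   Context: For a function $g$ defined on a subset $D\subseteq\mathbb{R}$ (extended by $+\infty$ outside $D$), its Fenchel–Legendre dual is $g^*(x)=\sup_{y\in D}(xy-g(y))$. A function $g:I\to(0,\infty)$ is log-concave if $\log g$ is concave. *)

(* Defs.v *)
From HB Require Import structures.
From mathcomp Require Import all_boot all_order all_algebra.
From mathcomp Require Import all_classical all_reals all_analysis.
Set Implicit Arguments. Unset Strict Implicit. Unset Printing Implicit Defensive.
Import Order.TTheory GRing.Theory Num.Theory.
Local Open Scope classical_set_scope.
Local Open Scope ring_scope.

(* Integral w.r.t. Lebesgue measure on R^n (= n.-tuple R) of a function with
   values in \bar R, defined as the iterated one-dimensional Lebesgue
   integral (by Tonelli this is the integral w.r.t. the n-dimensional
   Lebesgue measure for nonnegative measurable integrands). *)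
Fixpoint lebesgue_int_Rn (R : realType) (n : nat) :
    (n.-tuple R -> \bar R) -> \bar R :=
  match n with
  | 0 => fun g => g [tuple]
  | n'.+1 => fun g =>
      (\int[@lebesgue_measure R]_x
         lebesgue_int_Rn (fun t : n'.-tuple R => g [tuple of x :: t]))%E
  end.

Definition has_density (d : measure_display) (T : measurableType d)
    (R : realType) (P : probability T R) (n : nat)
    (X : T -> n.-tuple R) (f : n.-tuple R -> R) :=
  measurable_fun setT f /\ (forall x, 0 <= f x) /\
  forall A : set (n.-tuple R), measurable A ->
    P (X @^-1` A) = lebesgue_int_Rn (fun x => (f x * \1_A x)%:E).

Definition concave_on (R : realType) (I : set R) (g : R -> R) :=
  forall x y t, I x -> I y -> 0 <= t <= 1 ->
    t * g x + (1 - t) * g y <= g (t * x + (1 - t) * y).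

Definition log_concave_on (R : realType) (I : set R) (g : R -> R) :=
  (forall x, I x -> 0 < g x) /\ concave_on I (fun x => ln (g x)).

Definition smooth_on (R : realType) (I : set R) (c : R -> R) :=
  forall (k : nat) x, I x -> derivable (derive1n k c) x 1.

(* Fenchel--Legendre dual of g restricted to D (g = +oo outside D) *)
Definition fenchel_dual (R : realType) (D : set R) (g : R -> R) (x : R)
  : \bar R := ereal_sup [set (x * y - g y)%:E | y in D].

(* Main.v *)
Require Import Defs.
From HB Require Import structures.
From mathcomp Require Import all_boot all_order all_algebra.
From mathcomp Require Import all_classical all_reals all_analysis.
From mathcomp Require Import ring lra.
From mathcomp Require Import measurable_realfun.
Import Order.TTheory GRing.Theory Num.Theory.
Import numFieldNormedType.Exports.
Local Open Scope classical_set_scope.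
Local Open Scope ring_scope.

Lemma fenchel_bound (R : realType) (p : R) (D : set R) (g : R -> R) (x : R) :
  0 <= p -> (forall y, D y -> p <= expR (- (x * y - g y))) ->
  (p%:E <= expeR (- fenchel_dual D g x))%E.
Proof.
move=> p0 H.
have [->|pn0] := eqVneq p 0; first exact: expeR_ge0.
have pp : 0 < p by rewrite lt_neqAle eq_sym pn0.
have : (fenchel_dual D g x <= (- ln p)%:E)%E.
  apply: ge_ereal_sup => _ [y Dy <-]; rewrite lee_fin.
  have := H y Dy; rewrite -ler_ln ?posrE ?expR_gt0 // expRK; lra.
rewrite EFinN leeNr => H2.
have -> : p%:E = expeR (ln p)%:E by rewrite /= lnK.
by rewrite lee_expeR.
Qed.

Lemma concave_slope (R : realType) (I : set R) (h : R -> R) s x :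
  concave_on I h -> I s -> I x -> I 0 -> s * x < 0 ->
  h x - h 0 <= x * ((h s - h 0) / s).
Proof.
move=> hc Is Ix I0 sx.
have : s != 0 by apply: contraTneq sx => ->; rewrite mul0r ltxx.
rewrite neq_lt => /orP[s0|s0].
- have x0 : 0 < x by nra.
  have xs : 0 < x - s by lra.
  set t := x / (x - s).
  have t01 : 0 <= t <= 1.
    apply/andP; split; first by rewrite divr_ge0 // ltW.
    by rewrite ler_pdivrMr // mul1r; lra.
  have := hc s x t Is Ix t01.
  have -> : t * s + (1 - t) * x = 0.
    by rewrite /t; field; rewrite gt_eqF.
  move=> H.
  have H' : x * (h s - h 0) - s * (h x - h 0) <= 0.
    have E : x * (h s - h 0) - s * (h x - h 0) = (x - s) * (t * h s + (1 - t) * h x - h 0).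
      by rewrite /t; field; rewrite gt_eqF.
    by rewrite E pmulr_rle0 //; lra.
  rewrite mulrA ler_ndivlMr //; nra.
- have x0 : x < 0 by nra.
  have xs : 0 < s - x by lra.
  set t := x / (x - s).
  have t01 : 0 <= t <= 1.
    have -> : t = (- x) / (s - x).
      by rewrite /t; field; rewrite gt_eqF // lt_eqF //; lra.
    apply/andP; split; first by rewrite divr_ge0 // ?ltW //; lra.
    by rewrite ler_pdivrMr // mul1r; lra.
  have := hc s x t Is Ix t01.
  have -> : t * s + (1 - t) * x = 0.
    by rewrite /t; field; rewrite lt_eqF // subr_lt0; lra.
  move=> H.
  have H' : s * (h x - h 0) - x * (h s - h 0) <= 0.
    have E : s * (h x - h 0) - x * (h s - h 0) = (s - x) * (t * h s + (1 - t) * h x - h 0).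
      by rewrite /t; field; rewrite lt_eqF // subr_lt0; lra.
    by rewrite E pmulr_rle0 //; lra.
  rewrite mulrA ler_pdivlMr //; nra.
Qed.

Theorem corollary2p5 (d : measure_display) (T : measurableType d)
  (R : realType) (P : probability T R) (n : nat)
  (X : T -> n.-tuple R) (f : n.-tuple R -> R) (phi : n.-tuple R -> R)
  (a b : R) (c : R -> R) :
  measurable_fun setT X ->
  has_density P X f ->
  measurable_fun setT phi ->
  0 < a -> 0 < b ->
  (forall alpha, -a < alpha < b ->
     ('E_P[fun w => expR (alpha * phi (X w))] < +oo)%E) ->
  smooth_on `]-a, b[ c ->
  log_concave_on `]-a, b[
    (fun alpha => expR (- c alpha) * fine 'E_P[fun w => expR (alpha * phi (X w))]) ->
  let psi := fun alpha => c alpha - c 0 - derive1 c 0 * alpha in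
  forall t, 0 < t ->
    (P [set w | ((phi (X w))%:E - 'E_P[fun w => phi (X w)] > t%:E)%E]
       <= expeR (- fenchel_dual `]0%R, b[ psi t))%E /\
    (P [set w | ((phi (X w))%:E - 'E_P[fun w => phi (X w)] < (- t)%:E)%E]
       <= expeR (- fenchel_dual `](- a)%R, 0%R[ psi (- t)%R))%E.
Proof.
move=> mX _ mphi a0 b0 hE hsm [hpos hconc] psi t t0.
set Z := fun w => phi (X w).
have mZ : measurable_fun setT Z by exact: measurableT_comp.
have mexp : forall al, measurable_fun setT (fun w => expR (al * Z w)).
  move=> al; apply: measurableT_comp; first exact: measurable_realfun.measurable_expR.
  by apply: measurable_realfun.measurable_funM => //; exact: measurable_cst.
have Lexp : forall al, -a < al < b -> (fun w => expR (al * Z w)) \in Lfun P 1.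
  move=> al hal; apply/Lfun1_integrable/integrableP; split.
    exact/measurable_EFinP.
  have := hE al hal; rewrite unlock.
  by rewrite (eq_integral (fun w => (expR (al * Z w))%:E)) // => w _; rewrite /= ger0_norm // expR_ge0.
have I0 : `]-a, b[%classic (0:R) by rewrite /= in_itv /= oppr_lt0 a0 b0.
set δ := Num.min a b / 2.
have δ0 : 0 < δ by rewrite divr_gt0 // lt_min a0 b0.
have δI : -a < δ < b /\ -a < -δ < b.
  have : δ < Num.min a b by rewrite /δ ltr_pdivrMr // ltr_pMr ?lt_min ?a0 ?b0 // ltr1n.
  rewrite lt_min => /andP[h1 h2]; split; apply/andP; split; lra.
have LZ : Z \in Lfun P 1.
  have Lg : (fun w => δ^-1 * (expR (δ * Z w) + expR (-δ * Z w))) \in Lfun P 1.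
    have -> : (fun w => δ^-1 * (expR (δ * Z w) + expR (-δ * Z w))) =
        δ^-1 *: ((fun w => expR (δ * Z w)) + (fun w => expR (-δ * Z w))).
      by apply/funext => w.
    by rewrite rpredZ // rpredD // Lexp //; case: δI.
  have iG := proj1 (Lfun1_integrable _ _) Lg.
  apply/Lfun1_integrable. apply: (le_integrable measurableT _ _ iG).
    exact/measurable_EFinP.
  move=> w _; rewrite /= lee_fin.
  rewrite [X in _ <= X]ger0_norm; last first.
    by rewrite mulr_ge0 ?invr_ge0 ?addr_ge0 ?expR_ge0 ?ltW.
  rewrite ler_pdivlMl //.
  have e1 := expR_ge1Dx (δ * Z w); have e2 := expR_ge1Dx (-δ * Z w).
  have p1 := expR_gt0 (δ * Z w); have p2 := expR_gt0 (-δ * Z w).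
  case: (lerP 0 (Z w)) => hz; [rewrite ger0_norm // | rewrite ltr0_norm //]; nra.
set m := fine ('E_P[Z])%E.
have hm : ('E_P[Z])%E = m%:E by rewrite fineK // expectation_fin_num.
set L := fun al => fine ('E_P[fun w => expR (al * Z w)])%E.
have hL : forall al, -a < al < b -> ('E_P[fun w => expR (al * Z w)])%E = (L al)%:E.
  by move=> al hal; rewrite fineK // expectation_fin_num // Lexp.
have L0 : L 0 = 1.
  rewrite /L (_ : (fun w => expR (0 * Z w)) = cst 1); last first.
    by apply/funext => w; rewrite mul0r expR0.
  by rewrite expectation_cst.
have Lpos : forall al, -a < al < b -> 0 < L al.
  move=> al hal; have := hpos al; rewrite /= in_itv /= => /(_ hal).
  by rewrite pmulr_rgt0 // expR_gt0.
have LkZ : forall k, (k \o* Z) \in Lfun P 1.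
  move=> k; have -> : k \o* Z = k *: Z by apply/funext => x /=; rewrite mulrC.
  exact: rpredZ.
have jensen : forall s, -a < s < b -> expR (s * m) <= L s.
  move=> s hs; rewrite -lee_fin -hL //.
  have -> : (expR (s * m))%:E =
      ('E_P[cst (expR (s * m) * (1 - s * m))%R \+ ((expR (s * m) * s)%R \o* Z)])%E.
    rewrite expectationD ?Lfun_cst ?LkZ // (expectation_cst P).
    rewrite expectationZl // hm -EFinM -EFinD; congr EFin; ring.
  rewrite !unlock; apply: le_integral => //.
  - have H : (cst (expR (s * m) * (1 - s * m)) \+ ((expR (s * m) * s) \o* Z)) \in Lfun P 1.
      by rewrite rpredD ?Lfun_cst ?LkZ.
    exact: (proj1 (Lfun1_integrable _ _) H).
  - exact: (proj1 (Lfun1_integrable _ _) (Lexp _ hs)).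
  move=> w _; rewrite /= lee_fin.
  have e1 := expR_ge1Dx (s * (Z w - m)).
  have -> : expR (s * Z w) = expR (s * m) * expR (s * (Z w - m)).
    by rewrite -expRD; congr expR; ring.
  have p1 := expR_gt0 (s * m).
  have -> : expR (s * m) * (1 - s * m) + Z w * (expR (s * m) * s) =
      expR (s * m) * (1 + s * (Z w - m)) by ring.
  by rewrite ler_wpM2l // ltW.
have chernoff : forall al k, -a < al < b ->
    (P [set w | (0 < al * (Z w - k))%R] <= (expR (- (al * k)) * L al)%:E)%E.
  move=> al k hal.
  have mF : measurable_fun setT (fun w => al * (Z w - k)).
    apply: measurable_funM; first exact: measurable_cst.
    by apply: measurable_funB => //; exact: measurable_cst.
  have mA : measurable [set w | 0 < al * (Z w - k)].
    have := mF measurableT _ (measurable_itv `]0, +oo[); rewrite setTI.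
    rewrite (_ : _ @^-1` _ = [set w | 0 < al * (Z w - k)]) //.
    by apply/seteqP; split => w /=; rewrite in_itv /= andbT.
  rewrite -expectation_indic //.
  have mG : measurable_fun setT (fun w => expR (al * Z w - al * k)).
    apply: measurableT_comp; first exact: measurable_expR.
    apply: measurable_funB; last exact: measurable_cst.
    by apply: measurable_funM => //; exact: measurable_cst.
  apply: (@le_trans _ _ ('E_P[fun w => expR (al * Z w - al * k)])%E).
    apply: expectation_le => //.
    apply: aeW => w /=; rewrite indicE.
    case: (boolP (w \in _)) => hw /=; last exact: expR_ge0.
    rewrite inE /= in hw.
    have := expR_ge1Dx (al * Z w - al * k).
    have -> : al * Z w - al * k = al * (Z w - k) by ring.
    lra.
  have -> : (fun w => expR (al * Z w - al * k)) =
      (expR (- (al * k))) \o* (fun w => expR (al * Z w)).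
    by apply/funext => w /=; rewrite -expRD.
  by rewrite expectationZl ?Lexp // (hL _ hal) -EFinM mulrC.
have key : forall al s, -a < al < b -> -a < s < b -> s * al < 0 ->
    ln (L al) - al * m <= c al - c 0 - al * ((c s - c 0) / s).
  move=> al s hal hs hsa.
  set h := fun x => ln (expR (- c x) * L x).
  have hhE : forall x, -a < x < b -> h x = - c x + ln (L x).
    by move=> x hx; rewrite /h lnM ?posrE ?expR_gt0 ?Lpos // expRK.
  have H := @concave_slope R _ _ s al hconc.
  have {H} : h al - h 0 <= al * ((h s - h 0) / s).
    by apply: H => //; rewrite /= in_itv /=.
  rewrite !hhE // => H.
  have E0 : ln (L 0) = 0 by rewrite L0 ln1.
  move: H; rewrite E0 addr0.
  have J : s * m <= ln (L s).
    by rewrite -[s * m]expRK ler_ln ?posrE ?expR_gt0 ?Lpos // jensen.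
  have s0 : s != 0 by apply: contraTneq hsa => ->; rewrite mul0r ltxx.
  set u := al / s.
  have E : forall Y, al * (Y / s) = u * Y by move=> Y; rewrite /u; field.
  have us : al = u * s by rewrite /u divfK.
  have u0 : u < 0.
    have : s * (u * s) < 0 by rewrite -us.
    have : 0 < s * s by rewrite -expr2 exprn_even_gt0 // s0.
    nra.
  have uJ : u * (ln (L s) - s * m) <= 0.
    apply: mulr_le0_ge0; [exact: ltW | by rewrite subr_ge0].
  rewrite !E us; lra.
have hQ : (fun s => (c s - c 0) / s) @ 0^' --> derive1 c 0.
  have hd : derivable c 0 1 by have := hsm 0%N 0 I0.
  move: hd; rewrite /derivable derive1E /derive.
  set G := (fun h => _).
  suff -> : G = (fun s => (c s - c 0) / s) by [].
  apply/funext => h; rewrite /G /= addr0.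
  change (h^-1 * (c (h * 1) - c 0) = (c h - c 0) / h); by rewrite mulr1 mulrC.
have bpos : forall al, 0 < al < b -> ln (L al) - al * m <= psi al.
  move=> al /andP[al0 alb].
  have hal : -a < al < b by apply/andP; split => //; lra.
  have hl := cvgMl_tmp (a := al) (cvg_dnbhs_at_left hQ).
  have : al * derive1 c 0 <= c al - c 0 - (ln (L al) - al * m).
    apply: (cvgr_to_le (hl _)); near=> s.
    have s0 : s < 0 by near: s; exact: nbhs_left_lt.
    have sa : -a < s by near: s; apply: nbhs_left_gt; lra.
    have hs : -a < s < b by apply/andP; split => //; lra.
    have := key al s hal hs (ltac:(nra)); lra.
  rewrite /psi; lra.
have bneg : forall al, -a < al < 0 -> ln (L al) - al * m <= psi al.
  move=> al /andP[ala al0].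
  have hal : -a < al < b by apply/andP; split => //; lra.
  have hl := cvgMl_tmp (a := al) (cvg_dnbhs_at_right hQ).
  have : al * derive1 c 0 <= c al - c 0 - (ln (L al) - al * m).
    apply: (cvgr_to_le (hl _)); near=> s.
    have s0 : 0 < s by near: s; exact: nbhs_right_gt.
    have sb : s < b by near: s; apply: nbhs_right_lt; lra.
    have hs : -a < s < b by apply/andP; split => //; lra.
    have := key al s hal hs (ltac:(nra)); lra.
  rewrite /psi; lra.
have mS : forall y k, measurable [set w | 0 < y * (Z w - k)].
  move=> y k.
  have mF : measurable_fun setT (fun w => y * (Z w - k)).
    apply: measurable_funM; first exact: measurable_cst.
    by apply: measurable_funB => //; exact: measurable_cst.
  have := mF measurableT _ (measurable_itv `]0, +oo[); rewrite setTI.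
  rewrite (_ : _ @^-1` _ = [set w | 0 < y * (Z w - k)]) //.
  by apply/seteqP; split => w /=; rewrite in_itv /= andbT.
have G : forall (A : set T) (D : set R) (x : R), measurable A ->
    (forall y, D y -> [/\ -a < y < b,
       [set w | 0 < y * (Z w - (m + x))] = A & ln (L y) - y * m <= psi y]) ->
    (P A <= expeR (- fenchel_dual D psi x))%E.
  move=> A D x mA H.
  have fA : P A \is a fin_num by rewrite fin_num_measure.
  rewrite -(fineK fA); apply: fenchel_bound; first exact: fine_ge0.
  move=> y Dy; case: (H y Dy) => hy eA hb.
  have := chernoff y (m + x) hy; rewrite eA -(fineK fA) lee_fin => h1.
  apply: (le_trans h1).
  rewrite -{1}(lnK (Lpos y hy)) -expRD ler_expR; lra.
split.
- rewrite hm; apply: G.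
    rewrite (_ : [set w | _] = [set w | 0 < 1 * (Z w - (m + t))]) //.
    by apply/seteqP; split => w /=; rewrite -EFinB lte_fin /Z mul1r; lra.
  move=> y; rewrite /= in_itv /= => /andP[y0 yb]; split.
  + by apply/andP; split => //; lra.
  + apply/seteqP; split => w /=; rewrite -EFinB lte_fin /Z; nra.
  + by apply: bpos; rewrite y0.
- rewrite hm; apply: G.
    rewrite (_ : [set w | _] = [set w | 0 < -1 * (Z w - (m - t))]) //.
    by apply/seteqP; split => w /=; rewrite -EFinB lte_fin /Z mulN1r; lra.
  move=> y; rewrite /= in_itv /= => /andP[ya y0]; split.
  + by apply/andP; split => //; lra.
  + apply/seteqP; split => w /=; rewrite -EFinB lte_fin /Z; nra.
  + by apply: bneg; rewrite ya.
Unshelve. all: by end_near.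
Qed.
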